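(* The degree histogram problem (on incremental graph streams, with error measured in $\ell_\infty$) admits an extendable bitwise AND gadget with $v(d)=O(d)$ and $t(d)=O(d^2)$.
   Context: The degree histogram of an $n$-vertex graph is $(d_1,\dots,d_{n-1})$ where $d_i$ is the number of vertices of degree $i$; the range carries the $\ell_\infty$ norm. Let $\zeta\in\mathbb N$ be a fixed constant and $m=\zeta d$. An extendable bitwise AND gadget for a graph function $g$ consists of positive increasing functions $v,t:\mathbb N\to\mathbb N$ and, for each $d$: an initial graph $H_{\mathrm{init}}=(V,E_0)$ with $|V|=v(d)$; edges $e_1,\dots,e_d\in\binom V2$, defining $H^1_x=H_{\mathrm{init}}\cup\{e_i: x_i=1\}$ for $x\in\{0,1\}^d$; and for every sequence of queries $q^1,\dots,q^m\in\{0,1\}^d$, edge sets $S^1,T^1,\dots,S^m,T^m$ and functions $\mathrm{dec}_j:\mathrm{Range}(g)\to\mathbb R$ (depending on the queries but not on $x$) such that: (a) each $\mathrm{dec}_j$ is $1$-Lipschitz with respect to the norm on $\mathrm{Range}(g)$; (b) with $Q^j_x=H^j_x\cup S^j$, $\mathrm{dec}_j(g(Q^j_x))-\mathrm{dec}_j(g(H^j_x))=\langle x,q^j\rangle$ for all $x$; (c) $H^{j+1}_x=Q^j_x\cup T^j$; and the total number of edge insertions $|E_0|+d+\sum_j(|S^j|+|T^j|)$ is at most $t(d)$. *)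

(* Defs.v *)
From HB Require Import structures.
From mathcomp Require Import all_boot all_order all_algebra.
From mathcomp Require Import Rstruct.
Set Implicit Arguments. Unset Strict Implicit. Unset Printing Implicit Defensive.
Import Order.TTheory GRing.Theory Num.Theory.
Local Open Scope ring_scope.

Notation R := Rdefinitions.R.

Definition is_edge (n : nat) (e : {set 'I_n}) : bool := #|e| == 2%N.
Definition edgeset (n : nat) (E : {set {set 'I_n}}) : Prop :=
  forall e, e \in E -> is_edge e.

Definition deg (n : nat) (E : {set {set 'I_n}}) (u : 'I_n) : nat :=
  #|[set e in E | u \in e]|.

(* Degree histogram (d_1, ..., d_{n-1}); entry i : 'I_(n.-1) is d_{i+1},
   the number of vertices of degree i+1. *)
Definition hist (n : nat) (E : {set {set 'I_n}}) : 'I_n.-1 -> R :=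
  fun i => (#|[set u : 'I_n | deg E u == i.+1]|)%:R.

Definition linf_dist (k : nat) (a b : 'I_k -> R) : R :=
  \big[Num.max/0]_(i < k) `|a i - b i|.

Definition lipschitz1 (k : nat) (f : ('I_k -> R) -> R) : Prop :=
  forall a b : 'I_k -> R, `|f a - f b| <= linf_dist a b.

Definition H1 (n d : nat) (E0 : {set {set 'I_n}}) (e : 'I_d -> {set 'I_n})
  (x : 'I_d -> bool) : {set {set 'I_n}} :=
  E0 :|: [set e i | i in [set i : 'I_d | x i]].

(* H^{j}_x for the 0-indexed query j : by (c), H^{j+1}_x = H^j_x ∪ S^j ∪ T^j,
   hence H^j_x = H^1_x ∪ ⋃_{k<j} (S^k ∪ T^k). *)
Definition Hj (n d m : nat) (E0 : {set {set 'I_n}}) (e : 'I_d -> {set 'I_n})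
  (S T : 'I_m -> {set {set 'I_n}}) (j : 'I_m) (x : 'I_d -> bool)
  : {set {set 'I_n}} :=
  H1 E0 e x :|: \bigcup_(k : 'I_m | (k < j)%N) (S k :|: T k).

Definition Qj (n d m : nat) (E0 : {set {set 'I_n}}) (e : 'I_d -> {set 'I_n})
  (S T : 'I_m -> {set {set 'I_n}}) (j : 'I_m) (x : 'I_d -> bool)
  : {set {set 'I_n}} :=
  Hj E0 e S T j x :|: S j.

Definition ip (d : nat) (x q : 'I_d -> bool) : nat :=
  (\sum_(i < d) ((x i && q i) : nat))%N.

Definition ext_AND_gadget_hist (zeta : nat) (v t : nat -> nat) : Prop :=
  (forall d, (0 < v d)%N) /\ (forall d, (0 < t d)%N) /\
  {homo v : a b / (a < b)%N} /\ {homo t : a b / (a < b)%N} /\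
  forall d : nat,
  exists (E0 : {set {set 'I_(v d)}}) (e : 'I_d -> {set 'I_(v d)}),
    edgeset E0 /\ (forall i, is_edge (e i)) /\
    forall q : 'I_(zeta * d) -> ('I_d -> bool),
    exists (S T : 'I_(zeta * d) -> {set {set 'I_(v d)}})
           (dec : 'I_(zeta * d) -> ('I_(v d).-1 -> R) -> R),
      (forall j, edgeset (S j) /\ edgeset (T j)) /\
      (forall j, lipschitz1 (dec j)) /\
      (forall j (x : 'I_d -> bool),
          dec j (hist (Qj E0 e S T j x)) - dec j (hist (Hj E0 e S T j x))
          = (ip x (q j))%:R) /\
      (#|E0| + d + \sum_(j < zeta * d) (#|S j| + #|T j|) <= t d)%N.

(* Main.v *)
Require Import Defs.
From mathcomp Require Import all_boot all_order all_algebra.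
From mathcomp Require Import Rstruct zify.
Set Implicit Arguments. Unset Strict Implicit. Unset Printing Implicit Defensive.
Import Order.TTheory GRing.Theory Num.Theory.

Lemma card_interval (n lo hi : nat) : (hi <= n)%N ->
  #|[set w : 'I_n | (lo <= w < hi)%N]| = (hi - lo)%N.
Proof.
move=> hn; rewrite -sum1_card big_mkcond /=.
under eq_bigr do rewrite inE.
rewrite -(big_mkord xpredT (fun i => if (lo <= i < hi)%N then 1%N else 0%N)).
case: (leqP lo hi) => hlh; last first.
  rewrite big1_seq /=; first lia. by move=> i _; case: ifP => //; lia.
rewrite (big_cat_nat (n:=lo)) ?(leq_trans hlh) //=.
rewrite (big_cat_nat (n:=hi) hlh hn) /=.
rewrite [X in (X + _)%N]big_nat_cond [X in (X + _)%N]big1; last first.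
  by move=> i /andP[/andP[_ h] _]; rewrite leqNgt h.
rewrite [X in (_ + (_ + X))%N]big_nat_cond [X in (_ + (_ + X))%N]big1; last first.
  by move=> i /andP[/andP[h _] _]; rewrite ltnNge h andbF.
rewrite big_nat_cond.
rewrite (eq_bigr (fun _ => 1%N)); last by move=> i /andP[-> _].
by rewrite -big_nat_cond sum_nat_const_nat muln1 add0n addn0.
Qed.

Section Gen.
Variables (n d : nat) (hd : (d <= n)%N).
Let a (i : 'I_d) : 'I_n := widen_ord hd i.
Variables (lo hi : 'I_d -> nat) (E : {set {set 'I_n}}).
Hypothesis hlo : forall i, (d <= lo i)%N.
Hypothesis hhi : forall i, (hi i <= n)%N.
Hypothesis HE : forall e, e \in E <->
  exists i (w : 'I_n), (lo i <= w < hi i)%N /\ e = [set a i; w].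

Lemma gen_edgeset : edgeset E.
Proof.
move=> e /HE [i [w [/andP[h1 h2] ->]]].
rewrite /is_edge cards2.
have -> : (a i != w) = true.
  apply/negP => /eqP h; have := f_equal val h; rewrite /= => e1.
  have := ltn_ord i; have := hlo i; lia.
by [].
Qed.

Lemma set2_inj (u w w' : 'I_n) : (u < d <= w)%N -> (u < d <= w')%N ->
  [set u; w] = [set u; w'] -> w = w'.
Proof.
move=> h h' e; have : w \in [set u; w'] by rewrite -e set22.
rewrite in_set2 => /orP[/eqP e1|/eqP //].
by move: h; rewrite e1; lia.
Qed.

Lemma gen_deg_a i : deg E (a i) = (hi i - lo i)%N.
Proof.
rewrite /deg.
have -> : [set e in E | a i \in e] =
   [set [set a i; w] | w in [set w : 'I_n | (lo i <= w < hi i)%N]].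
  apply/setP=> e; rewrite inE; apply/andP/imsetP.
  - case=> /HE [i' [w [hw ->]]]; rewrite in_set2 => /orP[/eqP e1|/eqP e1].
      have ei : i = i' by apply: val_inj; have := f_equal val e1.
      by subst i'; exists w; rewrite // inE.
    have := f_equal val e1; rewrite /= => e2.
    have := ltn_ord i; have := hlo i'; move: hw; lia.
  - case=> w; rewrite inE => hw ->; split; last by rewrite set21.
    by apply/HE; exists i, w.
rewrite card_in_imset ?card_interval //.
move=> w w'; rewrite !inE => h h'; apply: set2_inj; rewrite /=;
  have := ltn_ord i; have := hlo i; move: h h'; lia.
Qed.

Lemma gen_deg_other (w : 'I_n) : (d <= w)%N -> (deg E w <= d)%N.
Proof.
move=> hw; rewrite /deg.
apply: (@leq_trans #|[set [set a i; w] | i : 'I_d]|); last first.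
  by apply: (leq_trans (leq_imset_card _ _)); rewrite card_ord.
apply: subset_leq_card; apply/subsetP => e; rewrite inE => /andP[/HE].
case=> i [w' [hw' ->]]; rewrite in_set2 => /orP[/eqP e1|/eqP e1].
  have := f_equal val e1; rewrite /= => e2; have := ltn_ord i; lia.
by subst w'; apply/imsetP; exists i.
Qed.
End Gen.
Section Inst.
Variables (zeta d : nat).
Definition vv := (2*d + zeta*d).+1.
Lemma le_dv : (d <= vv)%N. Proof. rewrite /vv; lia. Qed.
Definition av (i : 'I_d) : 'I_vv := widen_ord le_dv i.
Definition vtx (k : nat) : 'I_vv := @inord (2*d + zeta*d) k.
Lemma vtxK k : (k < vv)%N -> val (vtx k) = k.
Proof. by move=> h; apply: inordK. Qed.
Lemma vtxK' k : (k <= 2*d + zeta*d)%N -> val (vtx k) = k.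
Proof. by move=> h; apply: inordK. Qed.

Lemma edge_av i (w : 'I_vv) : (d <= w)%N -> is_edge [set av i; w].
Proof.
move=> hw; rewrite /is_edge cards2.
have -> : (av i != w) = true.
  apply/negP => /eqP h; have := f_equal val h; rewrite /= => e1.
  have := ltn_ord i; lia.
by [].
Qed.

Definition E0v : {set {set 'I_vv}} :=
  [set e | [exists i : 'I_d, exists w : 'I_vv,
     ((d.+1 <= w < 2*d+1)%N) && (e == [set av i; w])]].
Definition ev (i : 'I_d) : {set 'I_vv} := [set av i; vtx d].
Definition Sv (q : 'I_(zeta*d) -> 'I_d -> bool) (j : 'I_(zeta*d)) : {set {set 'I_vv}} :=
  [set e | [exists i : 'I_d, q j i && (e == [set av i; vtx (2*d+1+j)])]].
Definition Tv (j : 'I_(zeta*d)) : {set {set 'I_vv}} :=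
  [set e | [exists i : 'I_d, e == [set av i; vtx (2*d+1+j)]]].
Definition loH (x : 'I_d -> bool) (i : 'I_d) : nat := if x i then d else d.+1.

Lemma Hj_spec q (x : 'I_d -> bool) (j : 'I_(zeta*d)) e :
  e \in Hj E0v ev (Sv q) Tv j x <->
  exists i (w : 'I_vv), (loH x i <= w < 2*d+1+j)%N /\ e = [set av i; w].
Proof.
have hj := ltn_ord j.
split.
- rewrite /Hj /H1 !in_setU => /orP[/orP[he|he]|he].
  + rewrite inE in he; case/existsP: he => i /existsP[w /andP[hw /eqP->]].
    exists i, w; split=>//; rewrite /loH; case: (x i); lia.
  + case/imsetP: he => i; rewrite inE => hx ->; exists i, (vtx d).
    rewrite vtxK' /loH ?hx; [split=>//; lia | lia].
  + case/bigcupP: he => k hk; have hk' := ltn_ord k.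
    rewrite in_setU !inE => /orP[/existsP[i /andP[_ /eqP->]]|/existsP[i /eqP->]];
    exists i, (vtx (2*d+1+k)); rewrite vtxK' /loH; try lia;
    (split=>//; case: (x i); lia).
- case=> i [w [hw ->]]; rewrite /Hj /H1 !in_setU.
  have hw' := ltn_ord w.
  have hdw : (d <= w)%N by move: hw; rewrite /loH; case: (x i); lia.
  case: (ltnP w d.+1) => h1.
    have xi : x i by move: hw; rewrite /loH; case: (x i) => //; lia.
    have -> : w = vtx d by apply: val_inj => /=; rewrite vtxK'; lia.
    by apply/orP; left; apply/orP; right; apply/imsetP; exists i; rewrite ?inE.
  case: (ltnP w (2*d+1)) => h2.
    apply/orP; left; apply/orP; left; rewrite inE; apply/existsP; exists i.
    by apply/existsP; exists w; rewrite eqxx andbT; apply/andP; split.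
  apply/orP; right.
  have hk : (w - (2*d+1) < zeta*d)%N by lia.
  apply/bigcupP; exists (Ordinal hk); first by rewrite /=; lia.
  rewrite in_setU; apply/orP; right; rewrite inE; apply/existsP; exists i.
  have -> : vtx (2 * d + 1 + Ordinal hk) = w.
    by apply: val_inj => /=; rewrite vtxK' /=; lia.
  by [].
Qed.

Lemma Qj_spec q (x : 'I_d -> bool) (j : 'I_(zeta*d)) e :
  e \in Qj E0v ev (Sv q) Tv j x <->
  exists i (w : 'I_vv), (loH x i <= w < 2*d+1+j + q j i)%N /\ e = [set av i; w].
Proof.
have hj := ltn_ord j.
rewrite /Qj in_setU; split.
- case/orP=> [/Hj_spec [i [w [hw ->]]]|].
    by exists i, w; split=>//; lia.
  rewrite inE => /existsP[i /andP[hq /eqP->]]; exists i, (vtx (2*d+1+j)).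
  rewrite vtxK' /loH ?hq; last lia.
  split=>//; case: (x i); lia.
- case=> i [w [hw ->]].
  case: (ltnP w (2*d+1+j)) => h.
    apply/orP; left; apply/Hj_spec; exists i, w; split=>//; lia.
  have hq : q j i by move: hw; case: (q j i) => //; lia.
  apply/orP; right; rewrite inE; apply/existsP; exists i; rewrite hq /=.
  have -> : vtx (2*d+1+j) = w.
    by apply: val_inj => /=; rewrite vtxK'; lia.
  by [].
Qed.

Lemma loH_ge x i : (d <= loH x i)%N.
Proof. by rewrite /loH; case: (x i). Qed.

Lemma dpos (j : 'I_(zeta*d)) : (0 < d)%N.
Proof. have := ltn_ord j; case: (posnP d) => [e|//]; rewrite e muln0 in j *; by []. Qed.

Lemma deg_H q x (j : 'I_(zeta*d)) (u : 'I_vv) :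
  (deg (Hj E0v ev (Sv q) Tv j x) u <= d + j + 1)%N.
Proof.
have hj := ltn_ord j.
have hhi : forall i : 'I_d, (2*d+1+j <= vv)%N by move=> i; rewrite /vv; lia.
case: (ltnP u d) => hu.
  have -> : u = av (Ordinal hu) by apply: val_inj.
  rewrite (@gen_deg_a vv d le_dv (loH x) (fun _ => 2*d+1+j) _ (loH_ge x) hhi
          (Hj_spec q x j)).
  have := loH_ge x (Ordinal hu); lia.
have := @gen_deg_other vv d le_dv (loH x) (fun _ => 2*d+1+j) _
          (Hj_spec q x j) u hu; lia.
Qed.

Lemma deg_Q q x (j : 'I_(zeta*d)) :
  [set u : 'I_vv | deg (Qj E0v ev (Sv q) Tv j x) u == (d + j + 1).+1] =
  [set av i | i in [set i | x i && q j i]].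
Proof.
have hj := ltn_ord j.
have hhi : forall i : 'I_d, (2*d+1+j + q j i <= vv)%N by move=> i; rewrite /vv; case: (q j i); lia.
have HA := @gen_deg_a vv d le_dv (loH x) (fun i => 2*d+1+j + q j i) _ (loH_ge x) hhi
          (Qj_spec q x j).
apply/setP => u; rewrite inE.
case: (ltnP u d) => hu.
  have -> : u = av (Ordinal hu) by apply: val_inj.
  rewrite HA /loH.
  rewrite mem_imset ?inE; last by move=> a b /(f_equal val) /= /val_inj.
  by case: (x _); case: (q j _); apply/idP/idP => /=; lia.
have := @gen_deg_other vv d le_dv (loH x) (fun i => 2*d+1+j + q j i) _
          (Qj_spec q x j) u hu.
have -> : (u \in [set av i | i in [set i | x i && q j i]]) = false.
  apply/negP => /imsetP [i _ e1]; have := f_equal val e1; rewrite /= => e2.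
  have := ltn_ord i; lia.
move=> h; apply/negP => /eqP; lia.
Qed.

Definition decv (j : 'I_(zeta*d)) (h : 'I_(vv.-1) -> R) : R :=
  oapp h 0%R (insub (d + j + 1) : option 'I_(vv.-1)).

Lemma decv_lip j : lipschitz1 (decv j).
Proof.
move=> a b; rewrite /decv; case: insub => [k|] /=.
  rewrite /linf_dist; exact: (le_bigmax _ (fun i => `|a i - b i|)%R k).
rewrite subrr normr0 /linf_dist; exact: bigmax_ge_id.
Qed.

Lemma card_set_ip (x q : 'I_d -> bool) : #|[set i | x i && q i]| = ip x q.
Proof.
rewrite -sum1_card /ip big_mkcond /=; apply: eq_bigr => i _.
by rewrite inE; case: (x i); case: (q i).
Qed.

Lemma decv_eq q x (j : 'I_(zeta*d)) :
  (decv j (hist (Qj E0v ev (Sv q) Tv j x)) - decv j (hist (Hj E0v ev (Sv q) Tv j x))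
   = (ip x (q j))%:R)%R.
Proof.
have hj := ltn_ord j; have hd := dpos j.
have hk : (d + j + 1 < vv.-1)%N by rewrite /vv /=; lia.
rewrite /decv; case: insubP => [k _ hkv|]; last by rewrite hk.
rewrite /= /hist hkv.
rewrite deg_Q card_in_imset; last by move=> a b _ _ /(f_equal val) /= /val_inj.
rewrite card_set_ip.
have -> : [set u : 'I_vv | deg (Hj E0v ev (Sv q) Tv j x) u == (d + j + 1).+1] = set0.
  apply/setP => u; rewrite !inE; apply/negP => /eqP h.
  by have := deg_H q x j u; rewrite h; lia.
by rewrite cards0 subr0.
Qed.

Lemma card_E0 : (#|E0v| <= d * vv)%N.
Proof.
apply: (@leq_trans #|[set [set av p.1; p.2] | p : 'I_d * 'I_vv]|).
  apply: subset_leq_card; apply/subsetP => e; rewrite inE.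
  case/existsP => i /existsP[w /andP[_ /eqP->]].
  by apply/imsetP; exists (i, w).
by apply: leq_trans (leq_imset_card _ _) _; rewrite ?cardsT card_prod !card_ord.
Qed.

Lemma card_S q j : (#|Sv q j| <= d)%N.
Proof.
apply: (@leq_trans #|[set [set av i; vtx (2*d+1+j)] | i : 'I_d]|).
  apply: subset_leq_card; apply/subsetP => e; rewrite inE.
  case/existsP => i /andP[_ /eqP->].
  by apply/imsetP; exists i.
by apply: leq_trans (leq_imset_card _ _) _; rewrite ?cardsT card_ord.
Qed.

Lemma card_T j : (#|Tv j| <= d)%N.
Proof.
apply: (@leq_trans #|[set [set av i; vtx (2*d+1+j)] | i : 'I_d]|).
  apply: subset_leq_card; apply/subsetP => e; rewrite inE.
  case/existsP => i /eqP->.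
  by apply/imsetP; exists i.
by apply: leq_trans (leq_imset_card _ _) _; rewrite ?cardsT card_ord.
Qed.
End Inst.

Theorem mainTheorem5 :
  forall zeta : nat,
  exists v t : nat -> nat,
    ext_AND_gadget_hist zeta v t /\
    (exists C N : nat, forall d : nat, (N <= d)%N -> (v d <= C * d)%N) /\
    (exists C N : nat, forall d : nat, (N <= d)%N -> (t d <= C * d ^ 2)%N).
Proof.
move=> zeta.
exists (vv zeta), (fun d => 3*(zeta+1)*d*d + 2*d + 1)%N.
split; last split.
- split; first by move=> d; rewrite /vv.
  split; first by move=> d; rewrite addn1.
  split.
    move=> a b h; rewrite /vv; have := leq_mul (leqnn zeta) (ltnW h); lia.
  split.
    move=> a b h /=; have := leq_mul (leq_mul (leqnn (3*(zeta+1))) (ltnW h)) (ltnW h); lia.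
  move=> d; exists (E0v zeta d), (@ev zeta d).
  split.
    move=> e; rewrite inE => /existsP[i /existsP[w /andP[/andP[hw _] /eqP->]]].
    apply: edge_av; lia.
  split.
    by move=> i; apply: edge_av; rewrite vtxK'; lia.
  move=> q; exists (Sv q), (@Tv zeta d), (@decv zeta d).
  split.
    move=> j; split => e; rewrite inE.
      case/existsP=> i /andP[_ /eqP->]; apply: edge_av; rewrite vtxK'; have := ltn_ord j; lia.
    case/existsP=> i /eqP->; apply: edge_av; rewrite vtxK'; have := ltn_ord j; lia.
  split; first exact: decv_lip.
  split; first by move=> j x; exact: decv_eq.
  have h1 := card_E0 zeta d.
  have h2 : (\sum_(j < zeta * d) (#|Sv q j| + #|Tv j|) <= \sum_(j < zeta*d) (2*d))%N.
    by apply: leq_sum => j _; have := card_S q j; have := card_T j; lia.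
  rewrite sum_nat_const card_ord in h2.
  move: h1 h2; rewrite /vv.
  have e1 : (d * (2 * d + zeta * d).+1 = 2*d*d + zeta*d*d + d)%N by rewrite mulnS; lia.
  have e2 : (3 * (zeta + 1) * d * d = 3*d*d + 3*(zeta*d*d))%N by nia.
  have e3 : (zeta * d * (2 * d) = 2 * (zeta*d*d))%N by nia.
  rewrite e1 e2 e3; lia.
- exists (3 + zeta), 1%N => d hd; rewrite /vv.
  have : ((3 + zeta) * d = 3 * d + zeta * d)%N by rewrite mulnDl.
  lia.
- exists (3*(zeta+1) + 3), 1%N => d hd.
  have e : ((3*(zeta+1) + 3) * d ^ 2 = 3*(zeta+1)*d*d + 3*d*d)%N
    by rewrite mulnDl expnS expn1 !mulnA.
  rewrite e; have : (d <= d * d)%N by rewrite leq_pmulr.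
  lia.
Qed.
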